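(* If a closed properly convex domain $\Omega\subset\mathbb{RP}^n$ is preserved by a linear flow $\Phi$, then $\Omega$ is reducible and $\Phi$ is hyperbolic.
   Context: $\Omega$ is properly convex if its closure is a compact convex subset of some affine chart. A properly convex set $\Omega$ is reducible if there are disjoint proper projective subspaces $\mathbb{RP}^a,\mathbb{RP}^b\subsetneq\mathbb{RP}^n$ such that every point of $\Omega$ lies on a line segment in $\Omega$ with one endpoint in $\mathbb{RP}^a\cap\mathrm{cl}\,\Omega$ and the other in $\mathbb{RP}^b\cap\mathrm{cl}\,\Omega$. A linear flow is an injective homomorphism $\Phi:\mathbb{R}\to\mathrm{PGL}(n+1,\mathbb{R})$ such that the orbit of every point is a proper subset of a projective line. It is hyperbolic if, after reparameterizing by an isomorphism of $\mathbb{R}$, there is a decomposition $\mathbb{R}^{n+1}=A\oplus B$ with $\Phi_t[a+b]=[a+e^tb]$ for $a\in A$, $b\in B$. *)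

(* Defs.v *)
From HB Require Import structures.
From mathcomp Require Import all_boot all_order all_algebra.
From mathcomp Require Import all_classical all_reals all_analysis.
Set Implicit Arguments. Unset Strict Implicit. Unset Printing Implicit Defensive.
Import Order.TTheory GRing.Theory Num.Theory.
Import numFieldNormedType.Exports.
Local Open Scope classical_set_scope.
Local Open Scope ring_scope.

(* The projective space RP^n is P(R^(n+1)), with R^(n+1) = 'rV[R]_(n.+1)
   (row vectors).  A point of RP^n is the class [v] of a nonzero vector v.
   A subset X of RP^n is represented by its lift: the predicate on vectors
   "v <> 0 /\ [v] in X".  All predicates on projective sets below are stated
   for such lifts (scale-invariant sets of nonzero vectors). *)

Section Proj.
Variables (R : realType) (n : nat).
Local Notation V := 'rV[R]_(n.+1).

Definition proj_eq (u v : V) : Prop :=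
  u != 0 /\ exists c : R, c != 0 /\ v = c *: u.

Definition proj_set (X : set V) : Prop :=
  (forall v, X v -> v != 0) /\
  (forall v (c : R), X v -> c != 0 -> X (c *: v)).

(* Closure in RP^n.  The quotient map V\{0} -> RP^n is open, so the preimage
   of the closure is the closure (in V\{0}) of the preimage. *)
Definition pclosure (X : set V) : set V :=
  fun v => v != 0 /\ closure X v.

Definition pclosed (X : set V) : Prop := pclosure X = X.

(* Nonempty interior in RP^n (again using openness of the quotient map). *)
Definition has_nonempty_interior (X : set V) : Prop :=
  exists v, (interior X) v.

Definition convex_vset (K : set V) : Prop :=
  forall u v (s : R), K u -> K v -> 0 <= s -> s <= 1 ->
    K (s *: u + (1 - s) *: v).

(* Affine chart A_f = {[v] : v *m f <> 0} for a nonzero linear functional f,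
   identified with the affine hyperplane {v : v *m f = 1}. *)
Definition properly_convex (X : set V) : Prop :=
  exists f : 'cV[R]_(n.+1),
    f != 0 /\
    (forall v, pclosure X v -> (v *m f) 0 0 != 0) /\
    let K := fun v : V => (v *m f) 0 0 = 1 /\ pclosure X v in
    compact K /\ convex_vset K.

(* Projective subspaces RP^a are P(U) for linear subspaces U of R^(n+1),
   represented as row spaces of square matrices (mxalgebra).
   Proper and nonempty: 0 < rank U < n+1. *)
Definition proper_proj_subspace (U : 'M[R]_(n.+1)) : Prop :=
  (0 < \rank U)%N /\ (\rank U < n.+1)%N.

Definition on_segment_between (X : set V) (A B : 'M[R]_(n.+1)) (x : V) : Prop :=
  exists p q : V,
    (p <= A)%MS /\ pclosure X p /\
    (q <= B)%MS /\ pclosure X q /\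
    (forall s : R, 0 <= s -> s <= 1 -> X (s *: p + (1 - s) *: q)) /\
    (exists s : R, 0 <= s /\ s <= 1 /\ proj_eq x (s *: p + (1 - s) *: q)).

Definition reducible (X : set V) : Prop :=
  exists A B : 'M[R]_(n.+1),
    proper_proj_subspace A /\ proper_proj_subspace B /\
    (A :&: B == (0 : 'M[R]_(n.+1)))%MS /\
    forall x, X x -> on_segment_between X A B x.

(* Elements of PGL(n+1,R) are represented by invertible matrices, acting on
   row vectors by v |-> v *m M; two matrices give the same element iff they
   are proportional. *)
Definition pgl_eq (M N : 'M[R]_(n.+1)) : Prop :=
  exists c : R, c != 0 /\ N = c *: M.

(* A linear flow: an injective continuous homomorphism R -> PGL(n+1,R),
   given by a continuous family of invertible representatives Phi t, such
   that the orbit of every point is a proper subset of a projective line. *)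
Definition linear_flow (Phi : R -> 'M[R]_(n.+1)) : Prop :=
  continuous Phi /\
  (forall t, Phi t \in unitmx) /\
  (forall s t, pgl_eq (Phi (s + t)) (Phi s *m Phi t)) /\
  (forall s t, pgl_eq (Phi s) (Phi t) -> s = t) /\
  (forall v : V, v != 0 ->
     exists L : 'M[R]_(n.+1),
       \rank L = 2%N /\
       (forall t, (v *m Phi t <= L)%MS) /\
       exists u : V, u != 0 /\ (u <= L)%MS /\
         forall t, ~ proj_eq (v *m Phi t) u).

Definition preserves (Phi : R -> 'M[R]_(n.+1)) (X : set V) : Prop :=
  forall t v, X v -> X (v *m Phi t).

Definition hyperbolic (Phi : R -> 'M[R]_(n.+1)) : Prop :=
  exists (c : R) (A B : 'M[R]_(n.+1)),
    c != 0 /\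
    (A :&: B == (0 : 'M[R]_(n.+1)))%MS /\ (A + B == 1%:M)%MS /\
    forall (t : R) (a b : V), (a <= A)%MS -> (b <= B)%MS -> a + b != 0 ->
      proj_eq ((a + b) *m Phi (c * t)) (a + expR t *: b).

End Proj.

(* Main.v *)
Require Import Defs.
From HB Require Import structures.
From mathcomp Require Import all_boot all_order all_algebra.
From mathcomp Require Import all_classical all_reals all_analysis.
From mathcomp Require Import ring lra.
Set Implicit Arguments. Unset Strict Implicit. Unset Printing Implicit Defensive.
Import Order.TTheory GRing.Theory Num.Theory.
Import numFieldNormedType.Exports.
Local Open Scope classical_set_scope.
Local Open Scope ring_scope.

Section Lin.
Variables (R : realType) (n : nat).
Local Notation V := 'rV[R]_(n.+1).

Lemma span2 (L : 'M[R]_(n.+1)) (x y z : V) :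
  \rank L = 2%N -> (x <= L)%MS -> (y <= L)%MS -> (z <= L)%MS -> x != 0 ->
  ~~ (y <= x)%MS -> exists a b : R, z = a *: x + b *: y.
Proof.
move=> rL xL yL zL x0 yx.
have sL : (x + y <= L)%MS by rewrite addsmx_sub xL yL.
have lt : (x < x + y)%MS.
  rewrite ltmxE addsmxSl /=; apply/negP => h; apply/negP: yx; apply/negPn.
  exact: submx_trans (addsmxSr x y) h.
have rk : (1 < \rank (x + y)%MS)%N.
  by move: (rank_ltmx lt); rewrite rank_rV x0.
have Ls : (L <= x + y)%MS.
  have := mxrank_leqif_sup sL; move=> [_ /= <-].
  rewrite rL eqn_leq; apply/andP; split; last by [].
  by have := mxrankS sL; rewrite rL.
have /sub_addsmxP [[u1 u2] /= ->] := submx_trans zL Ls.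
exists (u1 0 0), (u2 0 0).
by rewrite {1}[u1]mx11_scalar {1}[u2]mx11_scalar !mul_scalar_mx.
Qed.

End Lin.


Definition fv (R : realType) (n : nat) (f : 'cV[R]_n) (v : 'rV[R]_n) : R := (v *m f) 0 0.

Lemma fvD (R : realType) n (f : 'cV[R]_n) x y : fv f (x + y) = fv f x + fv f y.
Proof. by rewrite /fv mulmxDl mxE. Qed.
Lemma fvZ (R : realType) n (f : 'cV[R]_n) a x : fv f (a *: x) = a * fv f x.
Proof. by rewrite /fv -scalemxAl mxE. Qed.
Lemma fvN (R : realType) n (f : 'cV[R]_n) x : fv f (- x) = - fv f x.
Proof. by rewrite /fv mulNmx mxE. Qed.

Section Main.
Variables (R : realType) (n : nat).
Local Notation V := 'rV[R]_(n.+1).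
Variables (Om : set V) (f : 'cV[R]_(n.+1)).
Local Notation fv := (fv f).
Hypothesis Hne0 : forall v, Om v -> v != 0.
Hypothesis Hsc : forall v c, Om v -> c != 0 -> Om (c *: v).
Hypothesis Hf : forall v, Om v -> fv v != 0.
Hypothesis Hconv : forall u v s, Om u -> Om v -> fv u = 1 -> fv v = 1 ->
  0 <= s -> s <= 1 -> Om (s *: u + (1 - s) *: v).

Lemma conv_pos x y a b : Om x -> Om y -> 0 < fv x -> 0 < fv y ->
  0 <= a -> 0 <= b -> 0 < a + b -> Om (a *: x + b *: y).
Proof.
move=> Ox Oy fx fy a0 b0 ab.
have fx0 : fv x != 0 by rewrite gt_eqF.
have fy0 : fv y != 0 by rewrite gt_eqF.
have Z0 : 0 < a * fv x + b * fv y.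
  have [a0e|a0'] := eqVneq a 0.
    by rewrite a0e mul0r add0r; rewrite a0e add0r in ab; exact: mulr_gt0.
  have : 0 < a by rewrite lt_def a0' a0.
  move=> ap; rewrite ltr_pwDl ?mulr_gt0 ?mulr_ge0 // ltW //.
set Z := a * fv x + b * fv y in Z0 *.
have Z00 : Z != 0 by rewrite gt_eqF.
set s := a * fv x / Z.
have s0 : 0 <= s by rewrite /s divr_ge0 // ?mulr_ge0 // ltW.
have s1 : s <= 1.
  rewrite /s ler_pdivrMr // mul1r /Z lerDl mulr_ge0 // ltW //.
have := Hconv (Hsc Ox (invr_neq0 fx0)) (Hsc Oy (invr_neq0 fy0)) _ _ s0 s1.
rewrite !fvZ !mulVf // => /(_ erefl erefl) H.
have -> : a *: x + b *: y = Z *: (s *: ((fv x)^-1 *: x) + (1 - s) *: ((fv y)^-1 *: y)).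
  apply/rowP => j; rewrite !mxE /s /Z; field.
  by rewrite fx0 fy0 Z00.
exact: Hsc.
Qed.

Variable M : 'M[R]_(n.+1).
Hypothesis HM : forall z, Om z -> Om (z *m M).

Lemma sign_core x y : Om x -> Om y -> 0 < fv x -> 0 < fv y ->
  0 < fv (x *m M) * fv (y *m M).
Proof.
move=> Ox Oy fx fy.
have p0 : fv (x *m M) != 0 by apply: Hf; apply: HM.
have q0 : fv (y *m M) != 0 by apply: Hf; apply: HM.
rewrite lt_def mulf_neq0 //=.
rewrite leNgt; apply/negP => neg.
set p := fv (x *m M) in p0 neg *; set q := fv (y *m M) in q0 neg *.
have Oz : Om (`|q| *: x + `|p| *: y).
  apply: conv_pos => //; rewrite ?normr_ge0 //.
  by rewrite ltr_pwDl ?normr_gt0 // normr_ge0.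
have := Hf (HM Oz); rewrite mulmxDl -!scalemxAl fvD !fvZ -/p -/q.
case: (ltrgtP p 0) => hp; last by move: p0; rewrite hp eqxx.
- have hq : 0 < q by nra.
  by rewrite (ltr0_norm hp) (gtr0_norm hq) => /eqP; apply; ring.
- have hq : q < 0 by nra.
  by rewrite (gtr0_norm hp) (ltr0_norm hq) => /eqP; apply; ring.
Qed.

Lemma sign_gen x y : Om x -> Om y ->
  0 < fv x * fv (x *m M) * (fv y * fv (y *m M)).
Proof.
move=> Ox Oy.
have fx0 := Hf Ox; have fy0 := Hf Oy.
have H := @sign_core (fv x *: x) (fv y *: y) (Hsc Ox fx0) (Hsc Oy fy0).
rewrite !fvZ -!scalemxAl !fvZ in H.
have h1 : 0 < fv x * fv x by rewrite -expr2 exprn_even_gt0.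
have h2 : 0 < fv y * fv y by rewrite -expr2 exprn_even_gt0.
exact: H h1 h2.
Qed.

End Main.


Section Flow.
Variables (R : realType) (n : nat).
Local Notation V := 'rV[R]_(n.+1).
Variables (Om : set V) (Phi : R -> 'M[R]_(n.+1)).
Hypothesis Hsc : forall v c, Om v -> c != 0 -> Om (c *: v).
Hypothesis Hunit : forall t, Phi t \in unitmx.
Hypothesis Hhom : forall s t, exists c : R, c != 0 /\ Phi s *m Phi t = c *: Phi (s + t).
Hypothesis Hinj : forall s t, pgl_eq (Phi s) (Phi t) -> s = t.
Hypothesis Hpres : forall t v, Om v -> Om (v *m Phi t).

Lemma unit_inj t (v : V) : v *m Phi t = 0 -> v = 0.
Proof. by move=> H; rewrite -(mulmxK (Hunit t) v) H mul0mx. Qed.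

Lemma Phi0E : exists c0 : R, c0 != 0 /\ Phi 0 = c0%:M.
Proof.
have [c [c0 e]] := Hhom 0 0; rewrite addr0 in e.
exists c; split => //.
have := congr1 (mulmx (invmx (Phi 0))) e.
by rewrite mulKmx ?Hunit // -scalemxAr mulVmx ?Hunit // scalemx1.
Qed.

Lemma comm_scal s t : exists k : R, k ^+ 2 = 1 /\ Phi s *m Phi t = k *: (Phi t *m Phi s).
Proof.
have [c1 [c10 e1]] := Hhom s t; have [c2 [c20 e2]] := Hhom t s.
rewrite addrC in e2.
have e : Phi s *m Phi t = (c1 / c2) *: (Phi t *m Phi s).
  by rewrite e1 e2 scalerA divfK.
exists (c1 / c2); split => //.
have := congr1 determinant e; rewrite detZ !det_mulmx [X in _ = _ * X]mulrC.
move=> /eqP; rewrite -subr_eq0 -{1}[_ * _]mul1r -mulrBl mulf_eq0.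
have du : \det (Phi s) * \det (Phi t) != 0.
  rewrite mulf_neq0 //; apply/negP => /eqP h.
    by move: (Hunit s); rewrite unitmxE h unitr0.
  by move: (Hunit t); rewrite unitmxE h unitr0.
rewrite (negbTE du) orbF subr_eq0 eq_sym => /eqP h.
apply/eqP; rewrite sqr_norm_eq1 -(@pexpr_eq1 _ _ n.+1) // -normrX h normr1 //.
Qed.

Let T := Phi 1.

Lemma commT t : Phi t *m T = T *m Phi t.
Proof.
have [c [c0 e]] := Hhom (t / 2) (t / 2).
have h2 : t / 2 + t / 2 = t by field.
rewrite h2 in e.
have [k [k2 ek]] := comm_scal (t / 2) 1.
have -> : Phi t = c^-1 *: (Phi (t / 2) *m Phi (t / 2)).
  by rewrite e scalerA mulVf // scale1r.
rewrite -scalemxAl -scalemxAr; congr (_ *: _).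
rewrite -mulmxA ek -scalemxAr mulmxA ek -scalemxAl scalerA -expr2 k2 scale1r.
by rewrite mulmxA.
Qed.

Lemma pres_inv (z : V) : Om (z *m T) -> Om z.
Proof.
move=> Oz.
have [c [c0 e]] := Hhom 1 (-1); rewrite subrr in e.
have [c1 [c10 e0]] := Phi0E.
have := Hpres (-1) Oz; rewrite -mulmxA /T e e0 -scalemxAr mul_mx_scalar scalerA.
move=> H; have := Hsc H (invr_neq0 (mulf_neq0 c0 c10)).
by rewrite scalerA mulVf ?mulf_neq0 // scale1r.
Qed.

Lemma T_nonscalar (l : R) : ~ (forall v : V, v *m T = l *: v).
Proof.
move=> H.
have eT : T = l%:M.
  apply/row_matrixP => i.
  by rewrite -[T]mul1mx row_mul H -[l%:M]mul1mx row_mul mul_mx_scalar.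
have [c0 [c00 e0]] := Phi0E.
have l0 : l != 0.
  apply/negP => /eqP l0; move: (Hunit 1); rewrite -/T eT l0 unitmxE det_scalar.
  by rewrite expr0n /= unitr0.
suff: (0:R) = 1 by move/eqP; rewrite eq_sym oner_eq0.
apply: Hinj.
exists (l / c0); split; first by rewrite mulf_neq0 ?invr_neq0.
by rewrite -/T eT e0 scale_scalar_mx divfK.
Qed.

End Flow.


Lemma chain (R : realType) (a b c : R) : 0 < a * b -> 0 < b * c -> 0 < a * c.
Proof. move=> h1 h2; nra. Qed.

Lemma closure_norm (R : realType) (n : nat) (A : set 'rV[R]_n) x :
  (forall e : R, 0 < e -> exists y, A y /\ `|x - y| < e) -> closure A x.
Proof.
move=> H B /nbhs_ballP [e e0 sB]; have [y [Ay hy]] := H e e0.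
exists y; split => //; apply: sB; by rewrite -ball_normE.
Qed.

Section Dyn.
Variables (R : realType) (n : nat).
Local Notation V := 'rV[R]_(n.+1).
Variables (Om : set V) (Phi : R -> 'M[R]_(n.+1)) (f : 'cV[R]_(n.+1)).
Local Notation fv := (fv f).
Hypothesis Hne0 : forall v, Om v -> v != 0.
Hypothesis Hsc : forall v c, Om v -> c != 0 -> Om (c *: v).
Hypothesis Hf : forall v, Om v -> fv v != 0.
Hypothesis Hclo : forall v, v != 0 -> closure Om v -> Om v.
Hypothesis Hconv : forall u v s, Om u -> Om v -> fv u = 1 -> fv v = 1 ->
  0 <= s -> s <= 1 -> Om (s *: u + (1 - s) *: v).
Hypothesis Hunit : forall t, Phi t \in unitmx.
Hypothesis Hhom : forall s t, exists c : R, c != 0 /\ Phi s *m Phi t = c *: Phi (s + t).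
Hypothesis Hinj : forall s t, pgl_eq (Phi s) (Phi t) -> s = t.
Hypothesis Hpres : forall t v, Om v -> Om (v *m Phi t).
Hypothesis Horb : forall v : V, v != 0 ->
  exists L : 'M[R]_(n.+1), \rank L = 2%N /\ forall t, (v *m Phi t <= L)%MS.

Let T := Phi 1.

Lemma dep (v : V) : v != 0 ->
  (exists l, v *m T = l *: v) \/
  (exists a b, v *m T *m T = a *: (v *m T) + b *: v).
Proof.
move=> v0; have [L [rL HL]] := Horb v0.
have [c0 [c00 e0]] := Phi0E Hunit Hhom.
have vL : (v <= L)%MS.
  have := HL 0; rewrite e0 mul_mx_scalar => h.
  by rewrite -[v](scale1r) -(mulVf c00) -scalerA scalemx_sub.
have vTL : (v *m T <= L)%MS by exact: HL 1.
have vTTL : (v *m T *m T <= L)%MS.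
  have [c [_ e]] := Hhom 1 1.
  by rewrite -mulmxA /T e -scalemxAr scalemx_sub // HL.
case: (boolP (v *m T <= v)%MS) => h.
  by left; apply/sub_rVP.
right; have [a [b e]] := span2 rL vL vTL vTTL v0 h.
by exists b, a; rewrite e addrC.
Qed.

Lemma no_complex (v : V) a b : Om v ->
  v *m T *m T = a *: (v *m T) + b *: v -> 0 <= a ^+ 2 + 4 * b.
Proof.
move=> Ov e; rewrite leNgt; apply/negP => D0.
pose x k := iter k (fun z => z *m T) v.
have Ox : forall k, Om (x k).
  by elim=> [|k IH] //=; apply: Hpres.
have rec : forall k, x k.+2 = a *: x k.+1 + b *: x k.
  elim=> [|k IH]; first by [].
  have -> : x k.+3 = x k.+2 *m T by [].
  by rewrite {1}IH mulmxDl -!scalemxAl.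
pose u k := fv (x k).
have urec : forall k, u k.+2 = a * u k.+1 + b * u k.
  by move=> k; rewrite /u rec fvD !fvZ.
have u0 : forall k, u k != 0 by move=> k; apply: Hf.
pose s := u 0%N * u 1%N.
have su : forall k, 0 < s * (u k * u k.+1).
  by move=> k; apply: (sign_gen Hsc Hf Hconv (Hpres 1)).
have s0 : s != 0 by rewrite /s mulf_neq0.
pose p k := s * (u k.+1 / u k).
have pp : forall k, 0 < p k.
  move=> k; have := su k; rewrite /p.
  have -> : s * (u k * u k.+1) = (s * (u k.+1 / u k)) * (u k ^+ 2).
    by field.
  have h2 : 0 < u k ^+ 2 by rewrite exprn_even_gt0 // u0.
  by rewrite pmulr_lgt0.
have prec : forall k, p k * (p k - p k.+1) = p k ^+ 2 - s * a * p k - s ^+ 2 * b.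
  move=> k; rewrite /p urec; field.
  by rewrite !u0.
pose d0 := - (s ^+ 2) * (a ^+ 2 + 4 * b) / 4.
have d0p : 0 < d0.
  rewrite /d0 mulNr -mulrN divr_gt0 // mulr_gt0 ?exprn_even_gt0 //.
  by rewrite oppr_gt0.
have step : forall k, d0 <= p k * (p k - p k.+1).
  move=> k; rewrite prec /d0.
  have : 0 <= (p k - s * a / 2) ^+ 2 by rewrite sqr_ge0.
  move=> h; nra.
have p00 := pp 0%N.
have bnd : forall k, p k <= p 0%N - k%:R * (d0 / p 0%N).
  elim=> [|k IH]; first by rewrite mul0r subr0.
  have hk := step k; have pk := pp k.
  have dec : 0 < p k - p k.+1.
    have : 0 < p k * (p k - p k.+1) by exact: lt_le_trans hk.
    by rewrite pmulr_rgt0.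
  have hh : 0 <= k%:R * (d0 / p 0%N) by rewrite mulr_ge0 // divr_ge0 // ltW.
  have le0 : p k <= p 0%N by lra.
  have : d0 / p 0%N <= p k - p k.+1.
    rewrite ler_pdivrMr //.
    apply: le_trans hk _; rewrite mulrC ler_pM2l //.
  rewrite -natr1 mulrDl mul1r; lra.
pose N := Num.Def.archi_bound (p 0%N ^+ 2 / d0).
have hp2 : 0 < p 0%N ^+ 2 by rewrite exprn_gt0.
have hN := @archi_boundP _ (p 0%N ^+ 2 / d0) (ltW (divr_gt0 hp2 d0p)).
have := bnd N; have := pp N.
have : p 0%N < N%:R * (d0 / p 0%N).
  move: hN; rewrite ltr_pdivrMr // => h.
  rewrite mulrA ltr_pdivlMr // -expr2 //.
lra.
Qed.

Lemma chain2 (a b c t : R) : 0 < t * (a * b) -> 0 < t * (b * c) -> 0 < a * c.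
Proof.
move=> h1 h2.
have h := @chain R (t * a) b (t * c).
have t0 : t != 0 by apply/negP => /eqP t0; move: h1; rewrite t0 !mul0r ltxx.
have h3 : 0 < (t * a) * b by rewrite -mulrA.
have h4 : 0 < b * (t * c) by rewrite mulrCA.
have ht : 0 < t ^+ 2 by rewrite exprn_even_gt0.
by have := h h3 h4; rewrite mulrACA -expr2 pmulr_rgt0.
Qed.

Lemma no_jordan (v w : V) r : Om v -> w != 0 -> v *m T = r *: v + w ->
  w *m T = r *: w -> False.
Proof.
move=> Ov w0 ev ew.
have r0 : r != 0.
  apply/negP => /eqP r0; apply/negP: w0; apply/negPn/eqP.
  by apply: (@unit_inj _ _ _ Hunit 1); rewrite -/T ew r0 scale0r.
pose yp k := v + (k%:R / r) *: w.
have eyp : forall k, yp k *m T = r *: yp k.+1.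
  move=> k; rewrite /yp mulmxDl -scalemxAl ev ew -natr1.
  apply/rowP => j; rewrite !mxE; field; by rewrite r0.
have Oyp : forall k, Om (yp k).
  elim => [|k IH]; first by rewrite /yp mul0r scale0r addr0.
  have := Hsc (Hpres 1 IH) (invr_neq0 r0); rewrite -/T eyp scalerA mulVf //.
  by rewrite scale1r.
pose ym k := v - (k%:R / r) *: w.
have eym : forall k, ym k.+1 *m T = r *: ym k.
  move=> k; rewrite /ym mulmxBl -scalemxAl ev ew -natr1.
  apply/rowP => j; rewrite !mxE; field; by rewrite r0.
have Oym : forall k, Om (ym k).
  elim => [|k IH]; first by rewrite /ym mul0r scale0r subr0.
  apply: (pres_inv Hsc Hunit Hhom Hpres); rewrite -/T eym.
  exact: Hsc.
pose d := fv w / r.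
have fyp : forall k, fv (yp k) = fv v + k%:R * d.
  by move=> k; rewrite /yp fvD fvZ /d mulrA mulrAC.
have fym : forall k, fv (ym k) = fv v - k%:R * d.
  by move=> k; rewrite /ym fvD fvN fvZ /d mulrA mulrAC.
case: (eqVneq (fv w) 0) => fw.
  have cw : closure Om w.
    apply: closure_norm => e e0.
    pose k := (Num.Def.archi_bound (`|r| * `|v| / e)).+1.
    have he : 0 <= `|r| * `|v| / e by rewrite divr_ge0 // ?mulr_ge0 // ltW.
    have hk := @archi_boundP _ (`|r| * `|v| / e) he.
    have k0 : (k%:R : R) != 0 by rewrite pnatr_eq0.
    have kp : (0 : R) < k%:R by rewrite ltr0n.
    exists ((r / k%:R) *: yp k); split.
      by apply: Hsc => //; rewrite mulf_neq0 ?invr_neq0.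
    have -> : w - (r / k%:R) *: yp k = - ((r / k%:R) *: v).
      apply/rowP => j; rewrite /yp !mxE; field; by rewrite r0 k0.
    rewrite normrN normrZ normrM normfV (gtr0_norm kp).
    rewrite mulrAC ltr_pdivrMr //.
    move: hk; rewrite ltr_pdivrMr // => hk.
    apply: lt_le_trans hk _; rewrite mulrC ler_pM2l // /k ler_nat //.
  by move: (Hf (Hclo w0 cw)); rewrite fw eqxx.
pose sg := fv v * fv (v *m T).
have hsg : forall z, Om z -> 0 < sg * (fv z * fv (z *m T)).
  by move=> z Oz; apply: (sign_gen Hsc Hf Hconv (Hpres 1)).
pose P k := fv (yp k); pose Q k := fv (ym k).
have hP : forall k, 0 < sg * r * (P k * P k.+1).
  move=> k; have := hsg _ (Oyp k); rewrite eyp fvZ.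
  suff -> : sg * r * (P k * P k.+1) = sg * (fv (yp k) * (r * fv (yp k.+1))) by [].
  by rewrite /P; ring.
have hQ : forall k, 0 < sg * r * (Q k.+1 * Q k).
  move=> k; have := hsg _ (Oym k.+1); rewrite eym fvZ.
  suff -> : sg * r * (Q k.+1 * Q k) = sg * (fv (ym k.+1) * (r * fv (ym k))) by [].
  by rewrite /Q; ring.
have ev2 : forall m, 0 < P 0%N * P (m.*2) /\ 0 < Q 0%N * Q (m.*2).
  elim => [|m [IH1 IH2]].
    rewrite double0; split; rewrite -expr2 exprn_even_gt0 //; exact: Hf.
  rewrite doubleS; split.
    apply: chain IH1 _; exact: chain2 (hP _) (hP _).
  have hQ' : forall k, 0 < sg * r * (Q k * Q k.+1).
    by move=> k; rewrite [Q k * _]mulrC; exact: hQ k.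
  apply: chain IH2 _; exact: chain2 (hQ' _) (hQ' _).
pose m := Num.Def.archi_bound (`|fv v| / `|d|).
have d0 : d != 0 by rewrite /d mulf_neq0 ?invr_neq0.
have hd : 0 <= `|fv v| / `|d| by rewrite divr_ge0.
have hm := @archi_boundP _ (`|fv v| / `|d|) hd.
have [h1 h2] := ev2 m.
have hPQ : 0 < P m.*2 * Q m.*2.
  have h1' : 0 < P m.*2 * P 0%N by rewrite mulrC.
  have e : P 0%N = Q 0%N by rewrite /P /Q fyp fym !mul0r addr0 subr0.
  rewrite e in h1'; exact: chain h1' h2.
move: hPQ; rewrite /P /Q fyp fym -muln2 natrM.
move: hm; rewrite ltr_pdivrMr ?normr_gt0 // => hm.
have a2 : `|fv v| ^+ 2 = fv v ^+ 2 by rewrite real_normK ?num_real.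
have b2 : `|d| ^+ 2 = d ^+ 2 by rewrite real_normK ?num_real.
have a0 : 0 <= `|fv v| by [].
have b0 : 0 <= `|d| by [].
have m0 : (0 : R) <= m%:R by [].
nra.
Qed.

Lemma eig_sum (v : V) : Om v -> exists (e1 e2 : V) (l1 l2 : R),
  v = e1 + e2 /\ e1 *m T = l1 *: e1 /\ e2 *m T = l2 *: e2.
Proof.
move=> Ov; case: (dep (Hne0 Ov)) => [[l e]|[a [b e]]].
  by exists v, 0, l, l; rewrite addr0 mul0mx scaler0.
have D0 := no_complex Ov e.
case: (ltrgtP (a ^+ 2 + 4 * b) 0) => hD; first by move: D0; rewrite leNgt hD.
  pose sq := Num.sqrt (a ^+ 2 + 4 * b).
  have sq2 : sq ^+ 2 = a ^+ 2 + 4 * b by rewrite sqr_sqrtr // ltW.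
  have sq0 : sq != 0 by rewrite /sq sqrtr_eq0 -ltNge.
  have eb : b = (sq ^+ 2 - a ^+ 2) / 4 by rewrite sq2; field.
  pose r1 := (a + sq) / 2; pose r2 := (a - sq) / 2.
  exists (sq^-1 *: (v *m T - r2 *: v)), (- sq^-1 *: (v *m T - r1 *: v)), r1, r2.
  split; first by apply/rowP => j; rewrite !mxE /r1 /r2; field.
  split; rewrite -scalemxAl mulmxBl -scalemxAl e; apply/rowP => j;
    rewrite !mxE /r1 /r2 eb; field; exact: sq0.
pose r := a / 2.
have eb : b = - a ^+ 2 / 4 by lra.
pose w := v *m T - r *: v.
have ew : w *m T = r *: w.
  rewrite /w mulmxBl -scalemxAl e; apply/rowP => j; rewrite !mxE /r eb; by field.
have [w0|w0] := eqVneq w 0.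
  exists v, 0, r, r; rewrite addr0 mul0mx scaler0; split => //; split => //.
  by apply/eqP; rewrite -subr_eq0; apply/eqP; exact: w0.
exfalso; apply: (no_jordan Ov w0 _ ew).
by rewrite /w addrC subrK.
Qed.

End Dyn.


Section Dec.
Variables (R : realType) (n : nat).
Local Notation V := 'rV[R]_(n.+1).
Variables (Om : set V) (Phi : R -> 'M[R]_(n.+1)) (f : 'cV[R]_(n.+1)).
Local Notation fv := (fv f).
Hypothesis Hne0 : forall v, Om v -> v != 0.
Hypothesis Hsc : forall v c, Om v -> c != 0 -> Om (c *: v).
Hypothesis Hf : forall v, Om v -> fv v != 0.
Hypothesis Hclo : forall v, v != 0 -> closure Om v -> Om v.
Hypothesis Hconv : forall u v s, Om u -> Om v -> fv u = 1 -> fv v = 1 ->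
  0 <= s -> s <= 1 -> Om (s *: u + (1 - s) *: v).
Hypothesis Hint : exists v, interior Om v.
Hypothesis Hunit : forall t, Phi t \in unitmx.
Hypothesis Hhom : forall s t, exists c : R, c != 0 /\ Phi s *m Phi t = c *: Phi (s + t).
Hypothesis Hinj : forall s t, pgl_eq (Phi s) (Phi t) -> s = t.
Hypothesis Hpres : forall t v, Om v -> Om (v *m Phi t).
Hypothesis Horb : forall v : V, v != 0 ->
  exists L : 'M[R]_(n.+1), \rank L = 2%N /\ forall t, (v *m Phi t <= L)%MS.

Let T := Phi 1.

Lemma indep3 (e1 e2 e3 : V) l1 l2 l3 c1 c2 c3 : e1 != 0 ->
  e1 *m T = l1 *: e1 -> e2 *m T = l2 *: e2 -> e3 *m T = l3 *: e3 ->
  l1 != l2 -> l1 != l3 -> c1 *: e1 + c2 *: e2 + c3 *: e3 = 0 -> c1 = 0.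
Proof.
move=> e10 h1 h2 h3 d12 d13 hu.
set u := c1 *: e1 + c2 *: e2 + c3 *: e3 in hu.
have uT : u *m T = (c1 * l1) *: e1 + (c2 * l2) *: e2 + (c3 * l3) *: e3.
  by rewrite /u !mulmxDl -!scalemxAl h1 h2 h3 !scalerA.
have X0 : (c1 * (l1 - l3)) *: e1 + (c2 * (l2 - l3)) *: e2 = 0.
  have <- : u *m T - l3 *: u = (c1 * (l1 - l3)) *: e1 + (c2 * (l2 - l3)) *: e2.
    by rewrite uT /u; apply/rowP => j; rewrite !mxE; ring.
  by rewrite hu mul0mx scaler0 subrr.
have H : (c1 * (l1 - l3) * (l1 - l2)) *: e1 =
   ((c1 * (l1 - l3)) *: e1 + (c2 * (l2 - l3)) *: e2) *m T
   - l2 *: ((c1 * (l1 - l3)) *: e1 + (c2 * (l2 - l3)) *: e2).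
  rewrite mulmxDl -!scalemxAl h1 h2.
  by apply/rowP => j; rewrite !mxE; ring.
move: H; rewrite X0 mul0mx scaler0 subrr => /eqP; rewrite scaler_eq0 (negbTE e10) orbF.
rewrite !mulf_eq0 !subr_eq0 (negbTE d12) (negbTE d13) !orbF => /eqP //.
Qed.

Lemma three_eig (e1 e2 e3 : V) l1 l2 l3 : e1 != 0 -> e2 != 0 -> e3 != 0 ->
  e1 *m T = l1 *: e1 -> e2 *m T = l2 *: e2 -> e3 *m T = l3 *: e3 ->
  l1 != l2 -> l1 != l3 -> l2 != l3 -> False.
Proof.
move=> e10 e20 e30 h1 h2 h3 d12 d13 d23.
have I1 c1 c2 c3 : c1 *: e1 + c2 *: e2 + c3 *: e3 = 0 -> c1 = 0.
  exact: indep3 e10 h1 h2 h3 d12 d13.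
have I2 c1 c2 c3 : c1 *: e1 + c2 *: e2 + c3 *: e3 = 0 -> c2 = 0.
  move=> h; apply: (indep3 (e2 := e1) (e3 := e3) (c2 := c1) (c3 := c3) e20 h2 h1 h3).
  - by rewrite eq_sym.
  - exact: d23.
  by rewrite -h; congr (_ + _); rewrite addrC.
have v0 : e1 + e2 + e3 != 0.
  apply/negP => /eqP h; have := I1 1 1 1; rewrite !scale1r => /(_ h) /eqP.
  by rewrite oner_eq0.
have eT : (e1 + e2 + e3) *m T = l1 *: e1 + l2 *: e2 + l3 *: e3.
  by rewrite !mulmxDl h1 h2 h3.
case: (dep Hunit Hhom Horb v0) => [[l e]|[a [b e]]].
  have h : (l1 - l) *: e1 + (l2 - l) *: e2 + (l3 - l) *: e3 = 0.
    move: e; rewrite -/T eT => e.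
    apply/rowP => j; move/rowP: e => /(_ j); rewrite !mxE => e.
    lra.
  have q1 := I1 _ _ _ h; have q2 := I2 _ _ _ h.
  by move: d12; rewrite (_ : l1 = l2) ?eqxx //; lra.
have eTT : (e1 + e2 + e3) *m T *m T = l1 ^+ 2 *: e1 + l2 ^+ 2 *: e2 + l3 ^+ 2 *: e3.
  by rewrite eT !mulmxDl -!scalemxAl h1 h2 h3 !scalerA.
have h : (l1 ^+ 2 - a * l1 - b) *: e1 + (l2 ^+ 2 - a * l2 - b) *: e2
   + (l3 ^+ 2 - a * l3 - b) *: e3 = 0.
  move: e; rewrite -/T eTT eT => e.
  apply/rowP => j; move/rowP: e => /(_ j); rewrite !mxE => e.
  lra.
have q1 := I1 _ _ _ h; have q2 := I2 _ _ _ h.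
have I3 c1 c2 c3 : c1 *: e1 + c2 *: e2 + c3 *: e3 = 0 -> c3 = 0.
  move=> h'; apply: (indep3 (e2 := e1) (e3 := e2) (c2 := c1) (c3 := c2) e30 h3 h1 h2).
  - by rewrite eq_sym.
  - by rewrite eq_sym.
  by rewrite -h' [RHS]addrC addrA.
have q3 := I3 _ _ _ h.
have s12 : l1 + l2 = a.
  have : (l1 - l2) * (l1 + l2 - a) = 0 by rewrite -[0](subrr 0) -{1}q1 -q2; ring.
  by move/eqP; rewrite mulf_eq0 subr_eq0 (negbTE d12) /= subr_eq0 => /eqP.
have s13 : l1 + l3 = a.
  have : (l1 - l3) * (l1 + l3 - a) = 0 by rewrite -[0](subrr 0) -{1}q1 -q3; ring.
  by move/eqP; rewrite mulf_eq0 subr_eq0 (negbTE d13) /= subr_eq0 => /eqP.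
by move: d23; rewrite (_ : l2 = l3) ?eqxx //; lra.
Qed.

Lemma span_int (S : 'M[R]_(n.+1)) : (forall v, Om v -> (v <= S)%MS) ->
  forall x : V, (x <= S)%MS.
Proof.
move=> HS x; have [v0 iv] := Hint.
have Ov0 : Om v0 := nbhs_singleton iv.
move: iv => /nbhs_ballP [e e0 sB].
have [->|x0] := eqVneq x 0; first by rewrite sub0mx.
have nx : 0 < `|x| by rewrite normr_gt0.
pose k := e / (2 * `|x|).
have kp : 0 < k by rewrite divr_gt0 // mulr_gt0.
have Oy : Om (v0 + k *: x).
  apply: sB; rewrite -ball_normE /ball_ /= opprD addrA subrr add0r normrN normrZ.
  have -> : `|k| * `|x| = e / 2 by rewrite gtr0_norm // /k; field; rewrite gt_eqF.
  by rewrite ltr_pdivrMr // ltr_pMr // ltr1n.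
have : ((v0 + k *: x + (-1) *: v0)%R <= S)%MS.
  by apply: addmx_sub; [apply: HS | apply: scalemx_sub; apply: HS].
move=> /(scalemx_sub k^-1).
by rewrite scaleN1r addrAC subrr add0r scalerA mulVf ?gt_eqF // scale1r.
Qed.

Lemma decomp : exists (l1 l2 : R) (a0 b0 : V), l1 != l2 /\ a0 != 0 /\ b0 != 0 /\
  a0 *m T = l1 *: a0 /\ b0 *m T = l2 *: b0 /\
  forall x : V, (x <= eigenspace T l1 + eigenspace T l2)%MS.
Proof.
have [v0 iv] := Hint; have Ov0 : Om v0 := nbhs_singleton iv.
have Hes := eig_sum Hne0 Hsc Hf Hclo Hconv Hunit Hhom Hpres Horb.
have [a0 [l1 [a00 ea0]]] : exists (a0 : V) l1, a0 != 0 /\ a0 *m T = l1 *: a0.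
  have [e1 [e2 [m1 [m2 [ev [h1 h2]]]]]] := Hes _ Ov0.
  have [e10|e10] := eqVneq e1 0.
    exists e2, m2; split => //; apply/negP => /eqP e20.
    by move: (Hne0 Ov0); rewrite ev e10 e20 addr0 eqxx.
  by exists e1, m1.
have [v1 [Ov1 nv1]] : exists v1, Om v1 /\ ~~ (v1 <= eigenspace T l1)%MS.
  apply/not_existsP => H.
  apply: (T_nonscalar Hunit Hhom Hinj (l := l1)) => v; apply/eigenspaceP.
  apply: (span_int _ v) => w Ow; have := H w; apply: contra_notP => h.
  by split => //; apply/negP.
have [b0 [l2 [b00 [eb0 d12]]]] : exists (b0 : V) l2, b0 != 0 /\ b0 *m T = l2 *: b0 /\ l1 != l2.
  have [e1 [e2 [m1 [m2 [ev [h1 h2]]]]]] := Hes _ Ov1.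
  have [e10|e10] := eqVneq e1 0.
    have [e20|e20] := eqVneq e2 0.
      by move: (Hne0 Ov1); rewrite ev e10 e20 addr0 eqxx.
    exists e2, m2; split => //; split => //; apply/negP => /eqP em.
    by move: nv1; rewrite ev e10 add0r => /negP H; apply: H; apply/eigenspaceP; rewrite em.
  have [em1|em1] := eqVneq l1 m1; last by exists e1, m1.
  have [e20|e20] := eqVneq e2 0.
    by exfalso; move: nv1; rewrite ev e20 addr0 => /negP H; apply: H; apply/eigenspaceP; rewrite em1.
  have [em2|em2] := eqVneq l1 m2; last by exists e2, m2.
  exfalso; move: nv1; rewrite ev => /negP H; apply: H; apply: addmx_sub; apply/eigenspaceP.
    by rewrite em1.
  by rewrite em2.
exists l1, l2, a0, b0; do 5!(split => //).
apply: span_int => v Ov.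
have [e1 [e2 [m1 [m2 [ev [h1 h2]]]]]] := Hes _ Ov.
have key : forall (e : V) m, e *m T = m *: e ->
    (e <= eigenspace T l1 + eigenspace T l2)%MS.
  move=> e m he.
  have [->|e0] := eqVneq e 0; first by rewrite sub0mx.
  have [em|d1] := eqVneq l1 m.
    by apply: submx_trans (addsmxSl _ _); apply/eigenspaceP; rewrite em.
  have [em|d2] := eqVneq l2 m.
    by apply: submx_trans (addsmxSr _ _); apply/eigenspaceP; rewrite em.
  exfalso; exact: (three_eig a00 b00 e0 ea0 eb0 he d12 d1 d2).
by rewrite ev; apply: addmx_sub; [apply: key h1 | apply: key h2].
Qed.

End Dec.


Lemma cont_entry (R : realType) n (Phi : R -> 'M[R]_n) (a : 'rV[R]_n) j :
  continuous Phi -> continuous (fun t => (a *m Phi t) 0 j).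
Proof.
move=> hc.
have -> : (fun t => (a *m Phi t) 0 j) = (fun t => \sum_k a 0 k * Phi t k j).
  by apply: funext => t; rewrite mxE.
apply: continuous_big; first exact: add_continuous.
move=> k _ t; apply: continuousM; first exact: cvg_cst.
exact: (continuous_comp (hc t) (@coord_continuous R n n k j _)).
Qed.

Lemma cauchy_lin (R : realType) (g : R -> R) : continuous g ->
  (forall s t, g (s + t) = g s + g t) -> forall t, g t = t * g 1.
Proof.
move=> gc gadd.
pose h t := g t - t * g 1.
have hadd : forall s t, h (s + t) = h s + h t.
  by move=> s t; rewrite /h gadd; ring.
have h0 : h 0 = 0.
  by have := hadd 0 0; rewrite addr0; lra.
have hN : forall t, h (- t) = - h t.
  by move=> t; have := hadd t (- t); rewrite subrr h0; lra.
have hnat : forall (k : nat) t, h (k%:R * t) = k%:R * h t.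
  elim=> [|k IH] t; first by rewrite !mul0r h0.
  by rewrite -natr1 !mulrDl !mul1r hadd IH.
have h1 : h 1 = 0 by rewrite /h mul1r subrr.
have hint : forall z : int, h z%:~R = 0.
  case=> k.
    by have := hnat k 1; rewrite mulr1 h1 mulr0.
  by rewrite NegzE mulrNz hN; have := hnat k.+1 1; rewrite mulr1 h1 mulr0 => ->; rewrite oppr0.
have hrat : forall (z : int) (m : nat), h (z%:~R / m.+1%:R) = 0.
  move=> z m; have := hnat m.+1 (z%:~R / m.+1%:R).
  rewrite mulrC divfK ?pnatr_eq0 // hint => /eqP; rewrite eq_sym mulf_eq0 pnatr_eq0 /=.
  by move/eqP.
have hc : continuous h.
  move=> t; rewrite /h; apply: cvgB; first exact: gc.
  exact: cvgMr_tmp.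
suff: forall t, h t = 0 by move=> H t; have := H t; rewrite /h => /eqP; rewrite subr_eq0 => /eqP.
move=> t; apply/eqP; rewrite -normr_eq0; case: (eqVneq `|h t| 0) => // hne; exfalso.
have := hc t; move/cvgrPdist_lt.
have e0 : 0 < `|h t| by rewrite lt_def hne normr_ge0.
move=> /(_ _ e0) /nbhs_ballP [d d0 Hd].
pose m := Num.Def.archi_bound (d^-1).
have d0' : 0 < d by [].
have di : 0 <= d^-1 by rewrite invr_ge0 ltW.
have hm := @archi_boundP _ (d^-1) di.
pose z := Num.Def.floor (m.+1%:R * t).
have m0 : (0 : R) < m.+1%:R by rewrite ltr0n.
suff : `|h t - h (z%:~R / m.+1%:R)| < `|h t| by rewrite hrat subr0 ltxx.
apply: Hd.
rewrite -ball_normE /ball_ /=.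
have f1 := floor_le_tmp (m.+1%:R * t); have f2 := lt_succ_floor (m.+1%:R * t).
rewrite intrD /= -/z (_ : (1%:~R : R) = 1) // in f2.
have e1 : t - z%:~R / m.+1%:R = (m.+1%:R * t - z%:~R) / m.+1%:R.
  by field; rewrite gt_eqF.
rewrite e1 normrM normfV (gtr0_norm m0) ger0_norm ?subr_ge0 //.
rewrite ltr_pdivrMr //.
have : d^-1 < m.+1%:R by apply: lt_le_trans hm _; rewrite ler_nat.
rewrite invf_plt ?posrE // => hd.
have : 1 < d * m.+1%:R by move: hd; rewrite -(ltr_pM2r m0) mulVf ?gt_eqF.
rewrite -/z in f1.
lra.
Qed.


Section Hyp.
Variables (R : realType) (n : nat).
Local Notation V := 'rV[R]_(n.+1).
Variables (Om : set V) (Phi : R -> 'M[R]_(n.+1)).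
Hypothesis Hunit : forall t, Phi t \in unitmx.
Hypothesis Hhom : forall s t, exists c : R, c != 0 /\ Phi s *m Phi t = c *: Phi (s + t).
Hypothesis Horb : forall v : V, v != 0 ->
  exists L : 'M[R]_(n.+1), \rank L = 2%N /\ forall t, (v *m Phi t <= L)%MS.

Let T := Phi 1.

Lemma scal_inj (x y : R) (a : V) : a != 0 -> x *: a = y *: a -> x = y.
Proof.
move=> a0 /eqP; rewrite -subr_eq0 -scalerBl scaler_eq0 (negbTE a0) orbF subr_eq0.
by move/eqP.
Qed.

Lemma eig_cap (l l' : R) (x : V) : l != l' -> x *m T = l *: x -> x *m T = l' *: x -> x = 0.
Proof.
move=> d h h'; apply/eqP; move: h; rewrite h' => /eqP; rewrite -subr_eq0 -scalerBl.
by rewrite scaler_eq0 subr_eq0 eq_sym (negbTE d).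
Qed.

Lemma eig_gen (l l' : R) (c0 : V) : l != l' -> c0 != 0 -> c0 *m T = l' *: c0 ->
  forall t (a : V), a *m T = l *: a -> exists x, a *m Phi t = x *: a.
Proof.
move=> d c00 ec t a ea.
have [->|a0] := eqVneq a 0; first by exists 0; rewrite mul0mx scaler0.
have v0 : a + c0 != 0.
  apply/negP => /eqP h; have ec' : c0 = - a by apply/eqP; rewrite -addr_eq0 addrC h.
  apply/negP: c00; apply/negPn/eqP; apply: (eig_cap d _ ec).
  by rewrite ec' mulNmx ea scalerN.
have [L [rL HL]] := Horb v0.
have [c1 [c10 e0]] := Phi0E Hunit Hhom.
have vL : ((a + c0)%R <= L)%MS.
  have := HL 0; rewrite e0 mul_mx_scalar => h.
  by rewrite -[a + c0](scale1r) -(mulVf c10) -scalerA scalemx_sub.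
have vTL : (((a + c0)%R) *m T <= L)%MS by exact: HL 1.
have dl : l - l' != 0 by rewrite subr_eq0.
have ae : a = (l - l')^-1 *: ((a + c0) *m T + (- l') *: (a + c0)).
  rewrite mulmxDl ea ec; apply/rowP => j; rewrite !mxE; field; exact: dl.
have aL : (a <= L)%MS.
  by rewrite ae scalemx_sub // addmx_sub // scalemx_sub.
have cL : (c0 <= L)%MS.
  have -> : c0 = (a + c0) + (-1) *: a by rewrite scaleN1r addrAC subrr add0r.
  by rewrite addmx_sub // scalemx_sub.
have nc : ~~ (c0 <= a)%MS.
  apply/negP => /sub_rVP [k hk]; apply/negP: c00; apply/negPn/eqP.
  apply: (eig_cap d _ ec); by rewrite hk -scalemxAl ea !scalerA mulrC.
have [al [be he]] := span2 rL aL cL (HL t) a0 nc.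
exists al.
have w0 : (a *m Phi t - al *: a) + (c0 *m Phi t - be *: c0) = 0.
  by rewrite addrACA -opprD -he mulmxDl subrr.
have ea' : (a *m Phi t - al *: a) *m T = l *: (a *m Phi t - al *: a).
  rewrite mulmxBl -mulmxA (commT Hunit Hhom) mulmxA ea -!scalemxAl ea.
  by rewrite scalerBr scalerA scalerA mulrC.
have ec' : (c0 *m Phi t - be *: c0) *m T = l' *: (c0 *m Phi t - be *: c0).
  rewrite mulmxBl -mulmxA (commT Hunit Hhom) mulmxA ec -!scalemxAl ec.
  by rewrite scalerBr scalerA scalerA mulrC.
have : a *m Phi t - al *: a = - (c0 *m Phi t - be *: c0) by apply/eqP; rewrite -addr_eq0 w0.
move=> h; have : a *m Phi t - al *: a = 0.
  apply: (eig_cap d ea'); rewrite h mulNmx ec' scalerN //.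
by move/eqP; rewrite subr_eq0 => /eqP.
Qed.

Lemma scal_gen (l : R) (M : 'M[R]_(n.+1)) :
  (forall a : V, a *m T = l *: a -> exists x, a *m M = x *: a) ->
  forall (a0 : V) x0, a0 != 0 -> a0 *m T = l *: a0 -> a0 *m M = x0 *: a0 ->
  forall a : V, a *m T = l *: a -> a *m M = x0 *: a.
Proof.
move=> H a0 x0 a00 ea0 ex0 a ea.
have [x ex] := H a ea.
have ez : (a + a0) *m T = l *: (a + a0) by rewrite mulmxDl ea ea0 scalerDr.
have [z ezz] := H _ ez.
have [s0|s0] := eqVneq (a + a0) 0.
  have -> : a = - a0 by rewrite -(addrK a0 a) s0 sub0r.
  by rewrite mulNmx ex0 scalerN.
have e : x *: a + x0 *: a0 = z *: (a + a0) by rewrite -ex -ex0 -mulmxDl.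
have e2 : (x - z) *: a = (z - x0) *: a0.
  apply/rowP => j; move/rowP: e => /(_ j); rewrite !mxE => e; lra.
have [xz|xz] := eqVneq x z.
  move: e2; rewrite xz subrr scale0r => /esym/eqP; rewrite scaler_eq0 (negbTE a00) orbF.
  rewrite subr_eq0 => /eqP zx0; by rewrite ex xz zx0.
have ea2 : a = ((z - x0) / (x - z)) *: a0.
  by rewrite mulrC -scalerA -e2 scalerA mulVf ?subr_eq0 // scale1r.
by rewrite ea2 -scalemxAl ex0 !scalerA mulrC.
Qed.

End Hyp.


Section Final.
Variables (R : realType) (n : nat).
Local Notation V := 'rV[R]_(n.+1).
Variables (Om : set V) (Phi : R -> 'M[R]_(n.+1)).
Hypothesis Hunit : forall t, Phi t \in unitmx.
Hypothesis Hhom : forall s t, exists c : R, c != 0 /\ Phi s *m Phi t = c *: Phi (s + t).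
Hypothesis Horb : forall v : V, v != 0 ->
  exists L : 'M[R]_(n.+1), \rank L = 2%N /\ forall t, (v *m Phi t <= L)%MS.
Hypothesis Hcont : continuous Phi.

Variables (l1 l2 : R) (a0 b0 : V) (i0 j0 : 'I_n.+1).
Hypotheses (d12 : l1 != l2) (ea0 : a0 *m Phi 1 = l1 *: a0)
  (eb0 : b0 *m Phi 1 = l2 *: b0) (hi0 : a0 0 i0 != 0) (hj0 : b0 0 j0 != 0).

Let a00 : a0 != 0.
Proof. by apply/negP => /eqP h; move: hi0; rewrite h mxE eqxx. Qed.
Let b00 : b0 != 0.
Proof. by apply/negP => /eqP h; move: hj0; rewrite h mxE eqxx. Qed.
Let d21 : l2 != l1. Proof. by rewrite eq_sym. Qed.

Definition lam t := (a0 *m Phi t) 0 i0 / a0 0 i0.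
Definition mu t := (b0 *m Phi t) 0 j0 / b0 0 j0.

Lemma lamE t (a : V) : a *m Phi 1 = l1 *: a -> a *m Phi t = lam t *: a.
Proof.
have eA := eig_gen Hunit Hhom Horb d12 b00 eb0 t.
have [x hx] := eA _ ea0.
have xe : x = lam t by rewrite /lam hx mxE mulfK.
rewrite -xe; exact: (scal_gen eA a00 ea0 hx).
Qed.

Lemma muE t (b : V) : b *m Phi 1 = l2 *: b -> b *m Phi t = mu t *: b.
Proof.
have eB := eig_gen Hunit Hhom Horb d21 a00 ea0 t.
have [x hx] := eB _ eb0.
have xe : x = mu t by rewrite /mu hx mxE mulfK.
rewrite -xe; exact: (scal_gen eB b00 eb0 hx).
Qed.

Lemma lam0 t : lam t != 0.
Proof.
apply/negP => /eqP h; apply/negP: a00; apply/negPn/eqP.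
by apply: (unit_inj Hunit (t := t)); rewrite (lamE t ea0) h scale0r.
Qed.

Lemma mu0 t : mu t != 0.
Proof.
apply/negP => /eqP h; apply/negP: b00; apply/negPn/eqP.
by apply: (unit_inj Hunit (t := t)); rewrite (muE t eb0) h scale0r.
Qed.

Lemma lam1 : lam 1 = l1.
Proof. by apply: (scal_inj a00); rewrite -(lamE 1 ea0). Qed.
Lemma mu1 : mu 1 = l2.
Proof. by apply: (scal_inj b00); rewrite -(muE 1 eb0). Qed.

Lemma lamM s t : exists c, c != 0 /\ lam s * lam t = c * lam (s + t) /\
  mu s * mu t = c * mu (s + t).
Proof.
have [c [c0 e]] := Hhom s t; exists c; split => //; split.
  apply: (scal_inj a00).
  by rewrite -scalerA -(lamE t ea0) scalemxAl -(lamE s ea0) -mulmxA e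
    -scalemxAr (lamE (s + t) ea0) scalerA.
apply: (scal_inj b00).
by rewrite -scalerA -(muE t eb0) scalemxAl -(muE s eb0) -mulmxA e
  -scalemxAr (muE (s + t) eb0) scalerA.
Qed.

Definition rho t := mu t / lam t.

Lemma rhoM s t : rho (s + t) = rho s * rho t.
Proof.
have [c [c0 [e1 e2]]] := lamM s t.
have l0 := lam0 (s + t).
rewrite /rho.
have -> : lam (s + t) = lam s * lam t / c by rewrite e1 mulrC mulKf.
have -> : mu (s + t) = mu s * mu t / c by rewrite e2 mulrC mulKf.
field.
by rewrite c0 !lam0.
Qed.

Lemma rho_gt0 t : 0 < rho t.
Proof.
have -> : t = t / 2 + t / 2 by field.
rewrite rhoM -expr2 exprn_even_gt0 //.
by rewrite /rho mulf_neq0 ?invr_neq0 ?mu0 ?lam0.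
Qed.

Lemma lam_cont : continuous lam.
Proof.
move=> t; rewrite (_ : lam = (fun x => (a0 *m Phi x) 0 i0) \* (fun _ => (a0 0 i0)^-1)) //.
apply: continuousM; [exact: cont_entry | exact: cvg_cst].
Qed.
Lemma mu_cont : continuous mu.
Proof.
move=> t; rewrite (_ : mu = (fun x => (b0 *m Phi x) 0 j0) \* (fun _ => (b0 0 j0)^-1)) //.
apply: continuousM; [exact: cont_entry | exact: cvg_cst].
Qed.

Lemma rho_cont : continuous rho.
Proof.
move=> t; rewrite (_ : rho = mu \* (fun x => (lam x)^-1)) //.
apply: continuousM; first exact: mu_cont.
apply: continuousV; [exact: lam0 | exact: lam_cont].
Qed.

Definition kk := ln (rho 1).

Lemma rhoE t : rho t = expR (t * kk).
Proof.
pose g x := ln (rho x).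
have gc : continuous g.
  move=> x; apply: continuous_comp; first exact: rho_cont.
  exact: continuous_ln (rho_gt0 x).
have gadd : forall s t, g (s + t) = g s + g t.
  by move=> s u; rewrite /g rhoM lnM // posrE rho_gt0.
have := cauchy_lin gc gadd t; rewrite /g -/kk => <-.
by rewrite lnK // posrE rho_gt0.
Qed.

Lemma kk0 : kk != 0.
Proof.
rewrite /kk ln_eq0 ?rho_gt0 // /rho mu1 lam1.
have l10 : l1 != 0 by rewrite -lam1 lam0.
by apply/negP => /eqP h; move: d12; rewrite eq_sym -[l2](divfK l10) h mul1r eqxx.
Qed.

Hypothesis Hall : forall x : V, (x <= eigenspace (Phi 1) l1 + eigenspace (Phi 1) l2)%MS.
Local Notation A := (eigenspace (Phi 1) l1).
Local Notation B := (eigenspace (Phi 1) l2).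

Lemma actE t (a b : V) : (a <= A)%MS -> (b <= B)%MS ->
  (a + b) *m Phi t = lam t *: (a + rho t *: b).
Proof.
move=> /eigenspaceP aA /eigenspaceP bB.
rewrite mulmxDl (lamE t aA) (muE t bB) scalerDr scalerA /rho.
by rewrite mulrC divfK ?lam0.
Qed.

Lemma capAB : (A :&: B == (0 : 'M[R]_(n.+1)))%MS.
Proof.
apply/andP; split; last exact: sub0mx.
apply/row_subP => i.
have r1 : (row i (A :&: B) <= A)%MS := submx_trans (row_sub i _) (capmxSl _ _).
have r2 : (row i (A :&: B) <= B)%MS := submx_trans (row_sub i _) (capmxSr _ _).
move/eigenspaceP: r1 => r1; move/eigenspaceP: r2 => r2.
by rewrite (eig_cap d12 r1 r2) sub0mx.
Qed.

Lemma sumAB : (A + B == (1%:M : 'M[R]_(n.+1)))%MS.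
Proof. by apply/andP; split; [exact: submx1 | apply/row_subP => i; exact: Hall]. Qed.

Lemma hyp : hyperbolic Phi.
Proof.
exists kk^-1, A, B; split; first by rewrite invr_neq0 // kk0.
split; first exact: capAB.
split; first exact: sumAB.
move=> t a b aA bB ab0.
rewrite actE // rhoE mulrAC mulVf ?kk0 // mul1r.
split.
  rewrite scaler_eq0 negb_or lam0 /=.
  apply/negP => /eqP h; apply/negP: ab0; apply/negPn/eqP.
  apply: (unit_inj Hunit (t := kk^-1 * t)); by rewrite actE // rhoE mulrAC mulVf ?kk0 // mul1r h scaler0.
exists (lam (kk^-1 * t))^-1; split; first by rewrite invr_neq0 // lam0.
by rewrite scalerA mulVf ?lam0 // scale1r.
Qed.

Variables (f : 'cV[R]_(n.+1)).
Local Notation fv := (fv f).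
Hypothesis Hne0 : forall v, Om v -> v != 0.
Hypothesis Hsc : forall v c, Om v -> c != 0 -> Om (c *: v).
Hypothesis Hf : forall v, Om v -> fv v != 0.
Hypothesis Hclo : forall v, v != 0 -> closure Om v -> Om v.
Hypothesis Hconv : forall u v s, Om u -> Om v -> fv u = 1 -> fv v = 1 ->
  0 <= s -> s <= 1 -> Om (s *: u + (1 - s) *: v).
Hypothesis Hint : exists v, interior Om v.
Hypothesis Hpres : forall t v, Om v -> Om (v *m Phi t).

Lemma splitAB (x : V) : exists a b : V, (a <= A)%MS /\ (b <= B)%MS /\ x = a + b.
Proof.
have /sub_addsmxP [u ->] := Hall x.
by exists (u.1 *m A), (u.2 *m B); rewrite !submxMl.
Qed.

Lemma line (a b : V) : (a <= A)%MS -> (b <= B)%MS -> Om (a + b) ->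
  forall r, 0 < r -> Om (a + r *: b).
Proof.
move=> aA bB Oab r r0.
have := Hpres (ln r / kk) Oab; rewrite actE // rhoE divfK ?kk0 //.
rewrite lnK ?posrE // => H.
have := Hsc H (invr_neq0 (lam0 (ln r / kk))).
by rewrite scalerA mulVf ?lam0 // scale1r.
Qed.

Lemma lim_cl (a b : V) : a != 0 -> (forall r, 0 < r -> Om (a + r *: b)) -> Om a.
Proof.
move=> an H; apply: Hclo => //; apply: closure_norm => e e0.
have nb : 0 < `|b| + 1 by rewrite ltr_pwDr // normr_ge0.
pose r := e / (`|b| + 1).
have r0 : 0 < r by rewrite divr_gt0.
exists (a + r *: b); split; first exact: H.
rewrite opprD addrA subrr add0r normrN normrZ gtr0_norm //.
rewrite /r mulrAC ltr_pdivrMr // ltr_pM2l //; lra.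
Qed.

Lemma comps (a b : V) : (a <= A)%MS -> (b <= B)%MS -> a != 0 -> b != 0 ->
  Om (a + b) -> Om a /\ Om b.
Proof.
move=> aA bB an bn Oab; have L := line aA bB Oab.
split; first exact: (lim_cl an L).
apply: (lim_cl (b := a) bn) => r r0.
have r0' : r != 0 by rewrite gt_eqF.
have ri : 0 < r^-1 by rewrite invr_gt0.
have := Hsc (L r^-1 ri) r0'.
by rewrite scalerDr scalerA mulfV ?gt_eqF // scale1r addrC.
Qed.

Lemma pts : exists pA pB : V, (pA <= A)%MS /\ (pB <= B)%MS /\ Om pA /\ Om pB.
Proof.
have [v0 iv] := Hint; have Ov0 : Om v0 := nbhs_singleton iv.
move: iv => /nbhs_ballP [e e0 sB].
have pert : forall c : V, c != 0 -> exists d, 0 < d /\ Om (v0 + d *: c).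
  move=> c c0; have nc : 0 < `|c| by rewrite normr_gt0.
  exists (e / (2 * `|c|)); split; first by rewrite divr_gt0 // mulr_gt0.
  apply: sB; rewrite -ball_normE /ball_ /= opprD addrA subrr add0r normrN normrZ.
  rewrite gtr0_norm ?divr_gt0 ?mulr_gt0 //.
  have -> : e / (2 * `|c|) * `|c| = e / 2 by field; rewrite gt_eqF.
  by rewrite ltr_pdivrMr // ltr_pMr // ltr1n.
have [a [b [aA [bB ev]]]] := splitAB v0.
have [a0'|an] := eqVneq a 0.
  have [d [d0 Od]] := pert _ a00.
  have bn : b != 0 by apply/negP => /eqP h; move: (Hne0 Ov0); rewrite ev a0' h addr0 eqxx.
  have dA : (d *: a0 <= A)%MS by apply: scalemx_sub; apply/eigenspaceP.
  have s1 : d *: a0 != 0 by rewrite scaler_eq0 negb_or gt_eqF.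
  have s2 : Om (d *: a0 + b) by rewrite addrC -[b]add0r -a0' -ev.
  have [hO1 hO2] := comps dA bB s1 bn s2.
  by exists (d *: a0), b.
have [b0'|bn] := eqVneq b 0.
  have [d [d0 Od]] := pert _ b00.
  have dB : (d *: b0 <= B)%MS by apply: scalemx_sub; apply/eigenspaceP.
  have s1 : d *: b0 != 0 by rewrite scaler_eq0 negb_or gt_eqF.
  have s2 : Om (a + d *: b0) by rewrite -[a]addr0 -b0' -ev.
  have [hO1 hO2] := comps aA dB an s1 s2.
  by exists a, (d *: b0).
have s2 : Om (a + b) by rewrite -ev.
have [hO1 hO2] := comps aA bB an bn s2.
by exists a, b.
Qed.

Hypothesis Hpcl : pclosure Om = Om.

Lemma conv_same (x y : V) s : Om x -> Om y -> 0 < fv x * fv y -> 0 <= s -> s <= 1 ->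
  Om (s *: x + (1 - s) *: y).
Proof.
move=> Ox Oy hxy s0 s1.
have s1' : 0 <= 1 - s by rewrite subr_ge0.
have ss : 0 < s + (1 - s) by rewrite addrC subrK ltr01.
case: (ltrgtP (fv x) 0) => hx.
- have hy : fv y < 0 by nra.
  have m1 : (-1 : R) != 0 by rewrite oppr_eq0 oner_eq0.
  have Ox' := Hsc Ox m1.
  have Oy' := Hsc Oy m1.
  rewrite !scaleN1r in Ox' Oy'.
  have := conv_pos Hsc Hconv Ox' Oy' _ _ s0 s1' ss.
  rewrite !fvN !oppr_gt0 => /(_ hx hy) H.
  have := Hsc H m1.
  by rewrite scaleN1r opprD !scalerN !opprK.
- have hy : 0 < fv y by nra.
  by have := conv_pos Hsc Hconv Ox Oy hx hy s0 s1' ss; apply.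
- by move: (Hf Ox); rewrite hx eqxx.
Qed.

Lemma adj (x p : V) : Om x -> Om p ->
  Om ((fv x * fv p) *: p) /\ 0 < fv x * fv ((fv x * fv p) *: p).
Proof.
move=> Ox Op; split; first by apply: Hsc => //; rewrite mulf_neq0 ?Hf.
rewrite fvZ (_ : fv x * (fv x * fv p * fv p) = (fv x * fv p) ^+ 2); last by ring.
rewrite exprn_even_gt0 //.
by rewrite mulf_neq0 ?Hf.
Qed.

Lemma proper_eig (l l' : R) (c c' : V) : l != l' -> c != 0 -> c *m Phi 1 = l *: c ->
  c' != 0 -> c' *m Phi 1 = l' *: c' -> proper_proj_subspace (eigenspace (Phi 1) l).
Proof.
move=> d c0 ec c0' ec'; split.
  rewrite lt0n mxrank_eq0; apply/negP => /eqP A0.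
  have : (c <= eigenspace (Phi 1) l)%MS by apply/eigenspaceP.
  by rewrite A0 submx0 (negbTE c0).
rewrite ltn_neqAle rank_leq_col andbT; apply/negP => /eqP hA.
have : (c' <= eigenspace (Phi 1) l)%MS by apply: submx_full; rewrite /row_full hA.
move/eigenspaceP => h.
by move: c0'; rewrite (eig_cap d h ec') eqxx.
Qed.

Lemma red : reducible Om.
Proof.
have [pA [pB [pAA [pBB [OpA OpB]]]]] := pts.
exists A, B; split; first exact: proper_eig d12 a00 ea0 b00 eb0.
split; first exact: proper_eig d21 b00 eb0 a00 ea0.
split; first exact: capAB.
move=> x Ox; have [a [b [aA [bB ex]]]] := splitAB x.
rewrite /on_segment_between Hpcl.
have x0 := Hne0 Ox.
have [a0'|an] := eqVneq a 0.
  have [Oq hq] := adj (Ox) OpA.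
  set p := (fv x * fv pA) *: pA in Oq hq.
  have Ob : Om b by rewrite ex a0' add0r in Ox.
  exists p, b; split; first exact: scalemx_sub.
  split => //; split => //; split => //; split.
    move=> s s0 s1; apply: conv_same => //.
    by rewrite mulrC -[b]add0r -a0' -ex.
  exists 0; split => //; split; first exact: ler01.
  split => //; exists 1; split; first exact: oner_neq0.
  by rewrite scale0r add0r subr0 !scale1r ex a0' add0r.
have [b0'|bn] := eqVneq b 0.
  have [Oq hq] := adj (Ox) OpB.
  set q := (fv x * fv pB) *: pB in Oq hq.
  have Oa : Om a by rewrite ex b0' addr0 in Ox.
  exists a, q; split => //; split => //; split; first exact: scalemx_sub.
  split => //; split.
    move=> s s0 s1; apply: conv_same => //.
    by rewrite -[a]addr0 -b0' -ex.
  exists 1; split; first exact: ler01.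
  split => //; split => //; exists 1; split; first exact: oner_neq0.
  by rewrite subrr scale0r addr0 !scale1r ex b0' addr0.
have Oab : Om (a + b) by rewrite -ex.
have [Oa Ob] := comps aA bB an bn Oab.
have L := line aA bB Oab.
exists a, b; do 4!(split => //); split.
  move=> s s0 s1.
  have [->|sn0] := eqVneq s 0; first by rewrite scale0r add0r subr0 scale1r.
  have [->|sn1] := eqVneq s 1; first by rewrite subrr scale0r addr0 scale1r.
  have sp : 0 < s by rewrite lt_def sn0 s0.
  have sp1 : 0 < 1 - s by rewrite subr_gt0 lt_def eq_sym sn1 s1.
  have := Hsc (L ((1 - s) / s) (divr_gt0 sp1 sp)) (lt0r_neq0 sp).
  by rewrite scalerDr scalerA mulrC divfK // gt_eqF.
exists (2^-1); split; first by rewrite invr_ge0 ler0n.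
split; first by rewrite invf_le1 // ler1n.
split => //; exists (2^-1); split; first by rewrite invr_neq0 // pnatr_eq0.
rewrite ex scalerDr; congr (_ + _); congr (_ *: _); by field.
Qed.

End Final.


Lemma nz_coord (R : realType) n (a : 'rV[R]_n) : a != 0 -> exists i, a 0 i != 0.
Proof.
move=> a0; case: (pselect (exists i, a 0 i != 0)) => // H; exfalso.
apply/negP: a0; apply/negPn/eqP/rowP => j; rewrite mxE.
apply/eqP/negPn/negP => hj; apply: H; by exists j.
Qed.

Theorem lemma1p4 (R : realType) (n : nat) (Omega : set 'rV[R]_(n.+1))
  (Phi : R -> 'M[R]_(n.+1)) :
  proj_set Omega ->
  pclosed Omega ->
  has_nonempty_interior Omega ->
  properly_convex Omega ->
  linear_flow Phi ->
  preserves Phi Omega ->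
  reducible Omega /\ hyperbolic Phi.
Proof.
move=> [Hne0 Hsc] Hpcl Hint [f [f0 [Hfp HK]]] [Hcont [Hunit [Hhom [Hinj Horb']]]] Hpres.
case: HK => _ Kconv.
have Hclo : forall v, v != 0 -> closure Omega v -> Omega v.
  by move=> v v0 cv; rewrite -Hpcl.
have Hf : forall v, Omega v -> fv f v != 0.
  by move=> v Ov; apply: Hfp; rewrite Hpcl.
have Hconv : forall u v s, Omega u -> Omega v -> fv f u = 1 -> fv f v = 1 ->
    0 <= s -> s <= 1 -> Omega (s *: u + (1 - s) *: v).
  move=> u v s Ou Ov fu fv s0 s1.
  have := Kconv u v s; rewrite /= Hpcl => /(_ (conj fu Ou) (conj fv Ov) s0 s1).
  by case.
have Horb : forall v : 'rV[R]_(n.+1), v != 0 ->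
    exists L : 'M[R]_(n.+1), \rank L = 2%N /\ forall t, (v *m Phi t <= L)%MS.
  by move=> v v0; have [L [rL [HL _]]] := Horb' v v0; exists L.
have [l1 [l2 [a0 [b0 [d12 [a00 [b00 [ea0 [eb0 Hall]]]]]]]]] :=
  decomp Hne0 Hsc Hf Hclo Hconv Hint Hunit Hhom Hinj Hpres Horb.
have [i0 hi0] := nz_coord a00.
have [j0 hj0] := nz_coord b00.
split.
  exact: (red Hunit Hhom Horb Hcont d12 ea0 eb0 hi0 hj0 Hall Hne0 Hsc Hf Hclo Hconv Hint Hpres Hpcl).
exact: (hyp Hunit Hhom Horb Hcont d12 ea0 eb0 hi0 hj0 Hall).
Qed.
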